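(* Let $G=(V,E)$ be a simple graph with $n\ge 2$ vertices and $|E|=2n-3$. Let $e\in E$, and let $G^*$ be the multigraph obtained from $G$ by adding a parallel copy $e_{add}$ of $e$. Suppose the edge set of $G^*$ is partitioned into two edge-disjoint spanning trees $T^r$ (red) and $T^b$ (black) with $e_{add}\in T^b$. Run the decomposition procedure on $(G^*,T^r,T^b)$. Then $G$ is a Laman graph if and only if every edge of $G^*$ is deleted by the time the procedure terminates.
   Context: A graph $G$ with $n$ vertices and $m$ edges is a Laman graph if $m=2n-3$ and, for every $k\ge 2$, every set of $k$ vertices induces at most $2k-3$ edges. Each edge of $G^*$ carries the color of the tree containing it. Decomposition procedure. Step 1 deletes $e_{add}$. For $i=2,3,\dots$, let $c_i$ be red if $i$ is even and black if $i$ is odd, and let $\bar c_i$ be the other color. Let $F$ be the set of not-yet-deleted edges of color $\bar c_i$. Step $i$ deletes, simultaneously, every not-yet-deleted edge of color $c_i$ whose two endpoints lie in different connected components of the graph $(V,F)$. The procedure terminates at the first step $i\ge 2$ in which no edge is deleted. *)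

(* Defs.v *)
From mathcomp Require Import all_boot.
Set Implicit Arguments. Unset Strict Implicit. Unset Printing Implicit Defensive.

Definition simple_graph (V : finType) (E : {set {set V}}) : Prop :=
  forall f, f \in E -> #|f| = 2.

Definition laman (V : finType) (E : {set {set V}}) : Prop :=
  #|E| = 2 * #|V| - 3 /\
  forall X : {set V}, 2 <= #|X| -> #|[set f in E | f \subset X]| <= 2 * #|X| - 3.

(* The multigraph G* : its edges are indexed by option {set V};
   [Some f] (for f in E) is the original edge f, [None] is the added
   parallel copy e_add of e. *)
Definition ends (V : finType) (e : {set V}) (o : option {set V}) : {set V} :=
  if o is Some f then f else e.

Definition edgesStar (V : finType) (E : {set {set V}}) : {set option {set V}} :=
  [set o | if o is Some f then f \in E else true].

Definition adj (V : finType) (e : {set V}) (F : {set option {set V}}) : rel V :=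
  fun x y => [exists o in F, [&& x != y, x \in ends e o & y \in ends e o]].

Definition same_comp (V : finType) (e : {set V}) (F : {set option {set V}})
  (o : option {set V}) : bool :=
  [forall x in ends e o, forall y in ends e o, connect (adj e F) x y].

Definition spanning_tree (V : finType) (e : {set V}) (F : {set option {set V}}) : Prop :=
  (forall x y : V, connect (adj e F) x y) /\
  (forall o, o \in F -> ~~ same_comp e (F :\ o) o).

(* colouring: col o = true means red, false means black *)
Definition color_step (i : nat) : bool := ~~ odd i. (* c_i: red iff i even *)

(* edges deleted at step i >= 2 given the set D of already deleted edges *)
Definition newdel (V : finType) (E : {set {set V}}) (e : {set V})
  (col : option {set V} -> bool) (i : nat) (D : {set option {set V}}) :
  {set option {set V}} :=
  let F := [set o in edgesStar E | (o \notin D) && (col o == ~~ color_step i)] in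
  [set o in edgesStar E | [&& o \notin D, col o == color_step i &
                              ~~ same_comp e F o]].

Fixpoint deleted (V : finType) (E : {set {set V}}) (e : {set V})
  (col : option {set V} -> bool) (i : nat) : {set option {set V}} :=
  match i with
  | 0 => set0
  | 1 => [set None]
  | (j.+1) as k => deleted E e col j :|: newdel E e col k (deleted E e col j)
  end.

Definition terminates_at (V : finType) (E : {set {set V}}) (e : {set V})
  (col : option {set V} -> bool) (i : nat) : Prop :=
  2 <= i /\ newdel E e col i (deleted E e col i.-1) = set0 /\
  (forall j, 2 <= j < i -> newdel E e col j (deleted E e col j.-1) != set0).

(* Main.v *)
Require Import Defs.
From Stdlib Require Import Lia.
From mathcomp Require Import all_boot.
Set Implicit Arguments. Unset Strict Implicit. Unset Printing Implicit Defensive.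

Ltac slia := repeat match goal with | H : is_true (_ <= _)%N |- _ => apply (elimT leP) in H | H : is_true (_ < _)%N |- _ => apply (elimT ltP) in H | |- is_true (_ <= _)%N => apply/leP | |- is_true (_ < _)%N => apply/ltP end; unfold addn, subn, muln in *; lia.

Section Gen.
Variables (V : finType) (e : {set V}).
Implicit Types F : {set option {set V}}.

Lemma conn_equiv (R r : rel V) : reflexive R -> transitive R -> subrel r R ->
  subrel (connect r) R.
Proof.
move=> Rr Rt sub x y /connectP [p pth ->]; elim: p x pth => //= z p IH x /andP[xz pz].
exact: Rt (sub _ _ xz) (IH _ pz).
Qed.

Lemma adj_sym F : symmetric (adj e F).
Proof.
move=> x y; rewrite /adj; apply/existsP/existsP => -[o /andP[oF /and3P[nxy xo yo]]];
  exists o; by rewrite oF eq_sym nxy xo yo.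
Qed.

Lemma csym F : connect_sym (adj e F).
Proof. exact: sym_connect_sym (adj_sym F). Qed.

Lemma adjP F x y : reflect (exists2 o, o \in F & [&& x != y, x \in ends e o & y \in ends e o]) (adj e F x y).
Proof. by apply: (iffP existsP) => -[o]; [case/andP=> oF H|move=> oF H]; exists o => //; rewrite oF. Qed.

Lemma adj_mono F1 F2 : F1 \subset F2 -> subrel (adj e F1) (adj e F2).
Proof. move=> s x y /adjP [o oF H]; apply/adjP; exists o => //; exact: (subsetP s). Qed.

Lemma conn_mono F1 F2 : F1 \subset F2 -> subrel (connect (adj e F1)) (connect (adj e F2)).
Proof.
move=> s; apply: conn_equiv => //; first exact: connect_trans.
by move=> x y /(adj_mono s) /connect1.
Qed.

Lemma same_comp_mono F1 F2 o : F1 \subset F2 -> same_comp e F1 o -> same_comp e F2 o.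
Proof.
move=> s /forall_inP H; apply/forall_inP => x xo; apply/forall_inP => y yo.
exact: (conn_mono s) ((forall_inP (H x xo)) y yo).
Qed.

Lemma two_set (A : {set V}) x z : #|A| = 2 -> x \in A -> z \in A -> x != z -> A = [set x; z].
Proof.
move=> cA xA zA nxz; apply/esym/eqP; rewrite eqEcard cA cards2 nxz andbT.
by apply/subsetP => y; rewrite !inE => /orP[]/eqP->.
Qed.

Lemma same_comp2 F o a b : ends e o = [set a; b] -> same_comp e F o = connect (adj e F) a b.
Proof.
move=> eo; apply/idP/idP.
  by move/forall_inP/(_ a); rewrite eo !inE eqxx => /(_ isT)/forall_inP/(_ b); rewrite !inE eqxx orbT; apply.
move=> ab; apply/forall_inP => x; rewrite eo !inE => /orP[]/eqP-> ; apply/forall_inP => y;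
  rewrite !inE => /orP[]/eqP->; rewrite ?connect0 //; by rewrite csym.
Qed.

Definition acyc F := forall o, o \in F -> ~~ same_comp e (F :\ o) o.
Definition cls F x := [set y | connect (adj e F) x y].
Definition nc F (X : {set V}) := #|cls F @: X|.

Lemma cls_eq F x y : (cls F x == cls F y) = connect (adj e F) x y.
Proof.
apply/eqP/idP => [H|H].
  have : y \in cls F y by rewrite inE connect0.
  by rewrite -H inE.
apply/setP => z; rewrite !inE; apply/idP/idP => H2.
  by apply: connect_trans H2; rewrite csym.
exact: connect_trans H H2.
Qed.

Lemma adj_del F o x y : adj e F x y -> adj e (F :\ o) x y \/ [&& x != y, x \in ends e o & y \in ends e o].
Proof.
case/adjP=> o' o'F H; case: (eqVneq o' o) => [<-|ne]; first by right.
by left; apply/adjP; exists o' => //; rewrite !inE ne.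
Qed.

Lemma conn_del_conn F o a b : ends e o = [set a; b] ->
  connect (adj e (F :\ o)) a b -> connect (adj e F) =2 connect (adj e (F :\ o)).
Proof.
move=> eo ab x y; apply/idP/idP; last by apply: conn_mono; exact: subsetDl.
move: x y; apply: conn_equiv => //; first exact: connect_trans.
move=> x y /(adj_del o) [/connect1 //|/and3P[_]]; rewrite eo !inE.
by case/orP=>/eqP-> /orP[]/eqP->; rewrite ?connect0 // csym.
Qed.

Section Char.
Variables (F : {set option {set V}}) (o : option {set V}) (a b : V).
Hypotheses (oF : o \in F) (eo : ends e o = [set a; b]) (nab : a != b).
Let F' := F :\ o.
Let U := cls F' a :|: cls F' b.

Lemma U_closed x y : connect (adj e F') x y -> (x \in U) = (y \in U).
Proof. by move=> xy; rewrite !inE !(same_connect_r (csym F') xy). Qed.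

Lemma conn_char x y : connect (adj e F) x y = connect (adj e F') x y || (x \in U) && (y \in U).
Proof.
have abF : connect (adj e F) a b.
  by apply: connect1; apply/adjP; exists o => //; rewrite nab eo !inE !eqxx orbT.
have UF z : z \in U -> connect (adj e F) a z.
  rewrite !inE => /orP[] H; first by apply: (conn_mono (subsetDl F [set o])) H.
  by apply: connect_trans abF _; apply: (conn_mono (subsetDl F [set o])) H.
apply/idP/idP.
  move: x y; apply: conn_equiv.
  - by move=> x; rewrite connect0.
  - move=> y x z /orP[xy|/andP[xU yU]] /orP[yz|/andP[yU' zU]].
    + by rewrite (connect_trans xy yz).
    + by rewrite (U_closed xy) yU' zU orbT.
    + by rewrite xU -(U_closed yz) yU orbT.
    + by rewrite xU zU orbT.
  - move=> x y /(adj_del o) [/connect1 -> //|/and3P[_]]; rewrite eo => xab yab.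
    by apply/orP; right; move: xab yab; rewrite !inE => /orP[]/eqP-> /orP[]/eqP->;
       rewrite !connect0 ?orbT.
case/orP => [|/andP[xU yU]]; first by apply: conn_mono; exact: subsetDl.
by apply: connect_trans (UF _ yU); rewrite csym; exact: UF.
Qed.

Lemma nc_del (X : {set V}) : a \in X -> b \in X -> ~~ connect (adj e F') a b -> nc F' X = (nc F X).+1.
Proof.
move=> aX bX nab'.
have clsF x : cls F x = if x \in U then U else cls F' x.
  apply/setP => z; rewrite [in LHS]inE conn_char.
  case: ifP => xU; last by rewrite andFb orbF inE.
  case zU: (z \in U); first by rewrite orbT.
  by rewrite orbF; apply/negbTE; apply: contraFN zU => xz; rewrite -(U_closed xz).
set W := X :\: U.
have XD : X = (X :&: U) :|: W by rewrite setID.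
have imW : cls F @: W = cls F' @: W.
  by apply: eq_in_imset => x /setDP[_ /negbTE xU]; by rewrite clsF xU.
have notW (C : {set V}) : C \in cls F' @: W -> forall z, z \in C -> z \notin U.
  case/imsetP => w /setDP[_ wU] -> z; rewrite inE => wz.
  by rewrite -(U_closed wz).
have aC : a \in cls F' a by rewrite inE connect0.
have bC : b \in cls F' b by rewrite inE connect0.
have aU : a \in U by rewrite !inE connect0.
have bU : b \in U by rewrite !inE connect0 orbT.
have im1 : cls F @: (X :&: U) = [set U].
  apply/setP => C; rewrite inE; apply/imsetP/eqP => [[x /setIP[_ xU] ->]|->].
    by rewrite clsF xU.
  by exists a; [rewrite inE aX aU | rewrite clsF aU].
have im2 : cls F' @: (X :&: U) = [set cls F' a; cls F' b].
  apply/setP => C; rewrite !inE; apply/imsetP/orP => [[x /setIP[_]]|[]/eqP->].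
    by move=> /setUP[] H ->; [left|right]; rewrite eq_sym cls_eq; move: H; rewrite inE.
    by exists a; rewrite // inE aX aU.
  by exists b; rewrite // inE bX bU.
rewrite /nc {1}XD {2}XD !imsetU im1 im2 imW.
have Un : U \notin cls F' @: W by apply/negP => /notW /(_ a aU); rewrite aU.
rewrite -setUA cardsU1 cardsU1 [in RHS]cardsU1 Un.
have -> : cls F' a \notin cls F' b |: cls F' @: W.
  rewrite !inE negb_or; apply/andP; split; first by rewrite cls_eq.
  by apply/negP => /notW /(_ a aC); rewrite aU.
have -> : cls F' b \notin cls F' @: W by apply/negP => /notW /(_ b bC); rewrite bU.
by [].
Qed.
End Char.

Definition inX F (X : {set V}) := [set o in F | ends e o \subset X].

Lemma main_count (X : {set V}) n : forall F, #|inX F X| = n ->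
  (forall o, o \in F -> #|ends e o| = 2) -> closed (adj e F) X ->
  #|X| <= n + nc F X /\ (acyc F -> #|X| = n + nc F X).
Proof.
elim: n => [|n IH] F cF c2 cl.
  suff -> : nc F X = #|X| by [].
  rewrite /nc card_in_imset // => x y xX yX /eqP; rewrite cls_eq => /connectP [p].
  case: p => [_ -> //|z p /= /andP [xz _] _].
  case/adjP: xz => o oF /and3P[nxz xo zo].
  have zX : z \in X by rewrite -(cl x z) //; apply/adjP; exists o => //; rewrite nxz xo zo.
  have : o \in inX F X.
    by rewrite inE oF (two_set (c2 o oF) xo zo nxz); apply/subsetP => w; rewrite !inE => /orP[]/eqP->.
  by move/eqP: cF; rewrite cards_eq0 => /eqP ->; rewrite inE.
have /set0Pn [o oFX] : inX F X != set0 by rewrite -card_gt0 cF.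
move: (oFX); rewrite inE => /andP[oF oX].
have /cards2P [a [b [nab eo]]] : #|ends e o| == 2 by rewrite c2.
have aX : a \in X by apply: (subsetP oX); rewrite eo !inE eqxx.
have bX : b \in X by apply: (subsetP oX); rewrite eo !inE eqxx orbT.
have cF' : #|inX (F :\ o) X| = n.
  have -> : inX (F :\ o) X = inX F X :\ o by apply/setP => o'; rewrite !inE andbA.
  by move: cF; rewrite (cardsD1 o) oFX => -[].
have c2' : forall o', o' \in F :\ o -> #|ends e o'| = 2 by move=> o' /setD1P[_]; exact: c2.
have cl' : closed (adj e (F :\ o)) X by move=> x y /(adj_mono (subsetDl F [set o])); exact: cl.
have [le1 eq1] := IH _ cF' c2' cl'.
case ab: (connect (adj e (F :\ o)) a b).
  have -> : nc F X = nc (F :\ o) X.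
    have H : cls F =1 cls (F :\ o) by move=> x; apply/setP => y; rewrite !inE (conn_del_conn eo ab).
    by rewrite /nc (eq_imset _ H).
  split; first by rewrite addSn ltnW.
  by move/(_ o oF); rewrite (same_comp2 _ eo) ab.
rewrite (nc_del oF eo nab aX bX (negbT ab)) in le1 eq1.
split; first by rewrite addSnnS.
move=> ac; rewrite addSnnS eq1 //.
move=> o' /setD1P[no' o'F]; apply: contra (ac o' o'F); apply: same_comp_mono.
by rewrite setDDl setUC -setDDl subsetDl.
Qed.

Lemma nc_pos F (X : {set V}) x : x \in X -> 0 < nc F X.
Proof. by move=> xX; rewrite /nc card_gt0; apply/set0Pn; exists (cls F x); apply: imset_f. Qed.

Lemma nc1_conn F (X : {set V}) x y : nc F X = 1 -> x \in X -> y \in X -> connect (adj e F) x y.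
Proof.
move/eqP/cards1P => [C HC] xX yX; rewrite -cls_eq.
have := imset_f (cls F) xX; have := imset_f (cls F) yX.
by rewrite HC !inE => /eqP -> /eqP ->.
Qed.

Lemma nc_le1 F (X : {set V}) a : (forall y, y \in X -> connect (adj e F) a y) -> nc F X <= 1.
Proof.
move=> H; rewrite /nc -(cards1 (cls F a)); apply: subset_leq_card; apply/subsetP => C.
by case/imsetP => y yX ->; rewrite inE eq_sym cls_eq H.
Qed.
End Gen.

Section Main.
Variables (V : finType) (E : {set {set V}}) (e : {set V}) (col : option {set V} -> bool).
Hypotheses (sg : simple_graph E) (eE : e \in E).
Hypotheses (trR : spanning_tree e [set o in edgesStar E | col o])
           (trB : spanning_tree e [set o in edgesStar E | ~~ col o]) (colN : col None = false).

Let Es := edgesStar E.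
Definition Fs b (D : {set option {set V}}) := [set o in Es | (o \notin D) && (col o == b)].
Definition tree b := [set o in Es | col o == b].

Lemma ends2 o : o \in Es -> #|ends e o| = 2.
Proof. by case: o => [f|]; rewrite inE /= => H; apply: sg. Qed.

Lemma deletedS j : deleted E e col j.+2 = deleted E e col j.+1 :|: newdel E e col j.+2 (deleted E e col j.+1).
Proof. by []. Qed.

Lemma newdelP i D o : (o \in newdel E e col i D) =
  [&& o \in Es, o \notin D, col o == color_step i & ~~ same_comp e (Fs (~~ color_step i) D) o].
Proof. by rewrite /newdel inE. Qed.

Lemma del_sub i : deleted E e col i \subset Es.
Proof.
elim: i => [|[|i] IH]; first exact: sub0set.
  by apply/subsetP => o; rewrite inE => /eqP ->; rewrite inE.
rewrite deletedS subUset IH /=; apply/subsetP => o; rewrite newdelP; by case/andP.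
Qed.

Lemma del_mono i j : i <= j -> deleted E e col i \subset deleted E e col j.
Proof.
move/subnK <-; elim: (j - i) => [|d IH]; first by rewrite add0n.
apply: subset_trans IH _; rewrite addSn; case: (d + i) => [|k]; first exact: sub0set.
by rewrite deletedS subsetUl.
Qed.

Lemma None_del i : 0 < i -> None \in deleted E e col i.
Proof. by move=> i0; apply: (subsetP (del_mono i0)); rewrite inE. Qed.

Lemma treeE1 : [set o in edgesStar E | col o] = tree true.
Proof. by apply/setP => o; rewrite !inE eqb_id. Qed.
Lemma treeE0 : [set o in edgesStar E | ~~ col o] = tree false.
Proof. by apply/setP => o; rewrite !inE eqbF_neg. Qed.

Lemma tree_sp b : spanning_tree e (tree b).
Proof. by case: b; [rewrite -treeE1|rewrite -treeE0]. Qed.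

Lemma inXE (F : {set option {set V}}) X : inX e (inX e F X) X = inX e F X.
Proof. by apply/setP => o; rewrite !inE; case: (o \in F); case: (ends e o \subset X). Qed.

Lemma sub_laman i : Es \subset deleted E e col i -> forall X : {set V}, 2 <= #|X| ->
  #|[set f in E | f \subset X]| <= 2 * #|X| - 3.
Proof.
move=> sub X k2; set A := [set f in E | f \subset X].
rewrite leqNgt; apply/negP => big.
set EX := inX e Es X.
have ac b : acyc e (inX e (tree b) X).
  move=> o; rewrite inE => /andP[oT _]; apply: contra ((tree_sp b).2 o oT).
  apply: same_comp_mono; apply: setSD; apply/subsetP => o'; rewrite inE; by case/andP.
have [x0 x0X] : exists x, x \in X.
  by apply/set0Pn; rewrite -card_gt0; apply: leq_trans k2.
have cnt b : #|X| = #|inX e (tree b) X| + nc e (inX e (tree b) X) X.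
  have := @main_count V e X _ (inX e (tree b) X); rewrite inXE => /(_ _ erefl) [].
  - by move=> o; rewrite inE => /andP[]; rewrite inE => /andP[oE _] _; apply: ends2.
  - move=> x y /adjP [o]; rewrite inE => /andP[_ oX] /and3P[_ xo yo].
    by rewrite (subsetP oX _ xo) (subsetP oX _ yo).
  by move=> _ /(_ (ac b)).
have pos b : 0 < nc e (inX e (tree b) X) X by apply: nc_pos x0X.
have split : #|EX| = #|inX e (tree true) X| + #|inX e (tree false) X|.
  rewrite -cardsUI.
  have -> : inX e (tree true) X :&: inX e (tree false) X = set0.
    by apply/setP => o; rewrite !inE; case: (col o); rewrite ?andbF ?andFb.
  have -> : inX e (tree true) X :|: inX e (tree false) X = EX.
    by apply/setP => o; rewrite !inE; case: (col o); rewrite ?andbF ?andbT ?orbF.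
  by rewrite cards0 addn0.
have SA : Some @: A \subset EX.
  by apply/subsetP => o /imsetP [f]; rewrite !inE => /andP[fE fX] ->; rewrite fE fX.
have cSA : #|Some @: A| = #|A| by apply: card_imset; move=> f g [].
have geA : #|A| <= #|EX| by rewrite -cSA; apply: subset_leq_card.
have c1 := cnt true; have c0 := cnt false; have p1 := pos true; have p0 := pos false.
set k := #|X| in k2 big c1 c0 *; set a := #|A| in big geA cSA *; set ex := #|EX| in geA split *.
set t1 := #|inX e (tree true) X| in split c1 *; set t0 := #|inX e (tree false) X| in split c0 *.
set n1 := nc e (inX e (tree true) X) X in c1 p1 *; set n0 := nc e (inX e (tree false) X) X in c0 p0 *.
have eX : ~~ (e \subset X).
  apply/negP => eX.
  have : None |: Some @: A \subset EX by rewrite subUset SA sub1set !inE eX.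
  move/subset_leq_card; rewrite cardsU1 cSA.
  have -> : None \notin Some @: A by apply/imsetP => -[].
  rewrite /= add1n => H; have H2 : a < ex by exact: H. clear H; slia.
have nc1 b : nc e (inX e (tree b) X) X = 1.
  by case: b; slia.
have conn b : forall x y, x \in X -> y \in X -> connect (adj e (inX e (tree b) X)) x y.
  by move=> x y; apply: nc1_conn (nc1 b).
have inv : forall j o, o \in EX -> o \notin deleted E e col j.
  elim => [|[|j] IH] o oEX; first by rewrite inE.
    rewrite inE; apply/eqP => oN; move: oEX; rewrite oN inE /= => /andP[_].
    by apply/negP.
  rewrite deletedS inE negb_or IH //= newdelP.
  have sc b : same_comp e (Fs b (deleted E e col j.+1)) o.
    apply: (@same_comp_mono _ _ (inX e (tree b) X)).
      apply/subsetP => o' o'X; rewrite inE IH //.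
        by move: o'X; rewrite !inE => /andP[/andP[-> ->] _].
      by move: o'X; rewrite !inE => /andP[/andP[-> _] ->].
    move: oEX; rewrite inE => /andP[_ oX].
    apply/forall_inP => x xo; apply/forall_inP => y yo; apply: conn; exact: (subsetP oX).
  by rewrite sc !andbF.
have /set0Pn [o oEX] : EX != set0 by rewrite -card_gt0; slia.
have := inv i o oEX; rewrite (subsetP sub) //.
by move: oEX; rewrite inE => /andP[].
Qed.

Lemma step2 : newdel E e col 2 (deleted E e col 1) != set0.
Proof.
have NB : None \in tree false by rewrite inE colN inE.
have := (tree_sp false).2 None NB.
have /cards2P [u [v [nuv eN]]] : #|ends e None| == 2 by rewrite ends2 // inE.
rewrite (same_comp2 _ eN) => nuv'.
apply/negP => /eqP H0.
have Fsub : Fs (~~ color_step 2) (deleted E e col 1) \subset tree false :\ None.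
  apply/subsetP => o; rewrite !inE => /andP[-> /andP[-> ->]]; by [].
have : connect (adj e (tree true)) u v := (tree_sp true).1 u v.
have sr : subrel (adj e (tree true)) (connect (adj e (Fs (~~ color_step 2) (deleted E e col 1)))).
  move=> x y /adjP [o oT /and3P[_ xo yo]].
  move: oT; rewrite inE => /andP[oE /eqP co].
  have : o \notin newdel E e col 2 (deleted E e col 1) by rewrite H0 inE.
  rewrite newdelP oE co /=.
  have -> : o \notin deleted E e col 1 by rewrite inE; apply/eqP => oN; move: co; rewrite oN colN.
  by rewrite andTb negbK => /forall_inP /(_ x xo) /forall_inP /(_ y yo).
move/(conn_equiv (fun x => connect0 _ x) (@connect_trans _ _) sr).
by move/(conn_mono Fsub); rewrite (negbTE nuv').
Qed.

Lemma exists_term : exists i, terminates_at E e col i.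
Proof.
pose P i := (1 < i) && (newdel E e col i (deleted E e col i.-1) == set0).
have cntl : forall i, (forall j, 1 < j <= i.+1 -> newdel E e col j (deleted E e col j.-1) != set0) ->
    i.+1 <= #|deleted E e col i.+1|.
  elim => [|i IH] H; first by rewrite cards1.
  have /set0Pn [o oN] := H i.+2 (leqnn _).
  have oD : o \notin deleted E e col i.+1 by move: oN; rewrite newdelP => /and4P[].
  rewrite deletedS; apply: leq_trans (_ : #|o |: deleted E e col i.+1| <= _).
    by rewrite cardsU1 oD add1n ltnS; apply: IH => j /andP[j1 ji]; apply: H; rewrite j1 (leq_trans ji).
  by apply: subset_leq_card; rewrite setUC; apply: setUS; rewrite sub1set.
have exP : exists i, P i.
  case: (boolP [exists j : 'I_(#|Es|).+2, P j]) => [/existsP [j Pj]|]; first by exists j.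
  rewrite negb_exists => /forallP Hn.
  have : #|Es|.+1 <= #|deleted E e col #|Es|.+1|.
    by apply: cntl => j /andP[j1 jE]; move: (Hn (@Ordinal #|Es|.+2 j jE)); rewrite /P /= j1.
  by rewrite ltnNge subset_leq_card // del_sub.
case: (ex_minnP exP) => m /andP[m1 /eqP Pm] mmin.
exists m; split => //; split => // j /andP[j1 jm]; apply/negP => /eqP H.
by move: (mmin j); rewrite /P j1 H eqxx leqNgt jm => /(_ isT).
Qed.

Lemma colS n : color_step n.+1 = ~~ color_step n.
Proof. by rewrite /color_step oddS. Qed.

Lemma term_all i : laman E -> terminates_at E e col i -> Es \subset deleted E e col i.
Proof.
case=> _ lam [i2 [Hi _]].
case: i i2 Hi => [|[|[|k]]] // _ Hi; first by move: step2; rewrite Hi eqxx.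
have {}Hi : newdel E e col k.+3 (deleted E e col k.+2) = set0 := Hi.
change (Es \subset deleted E e col k.+3).
set D := deleted E e col k.+2 in Hi *.
set D2 := deleted E e col k.+1.
have DE : D = D2 :|: newdel E e col k.+2 D2 by [].
rewrite deletedS -/D Hi setU0.
have sc o : o \in Es -> o \notin D -> same_comp e (Fs (~~ col o) D) o.
  move=> oE oD; case: (eqVneq (col o) (color_step k.+3)) => co.
    have : o \notin newdel E e col k.+3 D by rewrite Hi inE.
    by rewrite newdelP oE oD co eqxx /= negbK.
  have co' : col o = color_step k.+2 by move: co; rewrite colS; case: (col o); case: (color_step k.+2).
  move: oD; rewrite {1}DE inE negb_or => /andP[oD2 oN].
  move: oN; rewrite newdelP oE oD2 co' eqxx /= negbK.
  apply: same_comp_mono; apply/subsetP => o'; rewrite inE => /andP[o'E /andP[o'D2 o'c]].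
  rewrite inE o'E o'c andbT /= DE in_setU negb_or o'D2 /= newdelP (eqP o'c).
  by case: (color_step k.+2); rewrite /= ?andbF.
have eqconn b : subrel (connect (adj e (Fs b D))) (connect (adj e (Fs (~~ b) D))).
  apply: conn_equiv => //; first exact: connect_trans.
  move=> x y /adjP [o oF /and3P[_ xo yo]].
  move: (oF); rewrite inE => /andP[oE /andP[oD /eqP cob]].
  by move: (sc o oE oD); rewrite cob => /forall_inP /(_ x xo) /forall_inP /(_ y yo).
have conv b x y : connect (adj e (Fs b D)) x y = connect (adj e (Fs true D)) x y.
  case: b => //; apply/idP/idP; [exact: eqconn|exact: (eqconn true)].
apply/subsetP => o oE; apply/negPn/negP => oD.
have /cards2P [a [b' [nab eo]]] : #|ends e o| == 2 by rewrite ends2.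
set X := [set y | connect (adj e (Fs true D)) a y].
have cl b : closed (adj e (Fs b D)) X.
  move=> x y /connect1; rewrite conv => xy; rewrite !inE.
  exact: (same_connect_r (csym _ _) xy).
have le1 b : nc e (Fs b D) X <= 1 by apply: (nc_le1 (a := a)) => y; rewrite inE conv.
have c2 b o' : o' \in Fs b D -> #|ends e o'| = 2.
  by rewrite inE => /andP[o'E _]; apply: ends2.
have mc b : #|X| <= #|inX e (Fs b D) X| + nc e (Fs b D) X.
  by have [] := @main_count V e X _ (Fs b D) erefl (c2 b) (cl b).
have aX : a \in X by rewrite inE connect0.
have bX : b' \in X.
  rewrite inE -(conv (col o)); apply: connect1; apply/adjP; exists o.
    by rewrite inE oE oD eqxx.
  by rewrite nab eo !inE !eqxx orbT.
have k2 : 2 <= #|X|.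
  have := cards2 a b'; rewrite nab => <-; apply: subset_leq_card; apply/subsetP => y /set2P[]->; by [exact: aX|exact: bX].
set A := [set f in E | f \subset X].
have SA : inX e (Fs true D) X :|: inX e (Fs false D) X \subset Some @: A.
  apply/subsetP => o' H.
  have /and3P[o'E o'D o'X] : [&& o' \in Es, o' \notin D & ends e o' \subset X].
    by case/setUP: H; rewrite inE => /andP[]; rewrite inE => /andP[-> /andP[-> _]] ->.
  clear H; case: o' o'E o'D o'X => [f|] o'E o'D o'X.
    by move: o'E; rewrite inE /= => fE; apply: imset_f; rewrite inE fE o'X.
  by move: o'D; rewrite None_del.
have cSA : #|Some @: A| = #|A| by apply: card_imset; move=> f g [].
have split : #|inX e (Fs true D) X :|: inX e (Fs false D) X| =
    #|inX e (Fs true D) X| + #|inX e (Fs false D) X|.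
  rewrite -cardsUI.
  have -> : inX e (Fs true D) X :&: inX e (Fs false D) X = set0.
    by apply/setP => o'; rewrite !inE; case: (col o'); rewrite ?andbF ?andFb.
  by rewrite cards0 addn0.
have := subset_leq_card SA; rewrite split cSA => H.
have := lam X k2; rewrite -/A => H2.
have m1 := mc true; have m0 := mc false; have l1 := le1 true; have l0 := le1 false.
set x := #|X| in k2 m1 m0 *; set t1 := #|inX e (Fs true D) X| in H m1 *.
set t0 := #|inX e (Fs false D) X| in H m0 *; set aa := #|A| in H H2 *.
set n1 := nc e (Fs true D) X in m1 l1 *; set n0 := nc e (Fs false D) X in m0 l0 *.
slia.
Qed.
End Main.

Theorem mainTheorem2 (V : finType) (E : {set {set V}}) (e : {set V})
  (col : option {set V} -> bool) :
  simple_graph E ->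
  2 <= #|V| ->
  #|E| = 2 * #|V| - 3 ->
  e \in E ->
  (* T^r = red edges, T^b = black edges of G*, e_add = None is black *)
  spanning_tree e [set o in edgesStar E | col o] ->
  spanning_tree e [set o in edgesStar E | ~~ col o] ->
  col None = false ->
  (laman E <->
   exists i, terminates_at E e col i /\ edgesStar E \subset deleted E e col i).
Proof.
move=> sg _ cE eE tR tB cN; split.
  move=> lam; have [i Ti] := exists_term E e col.
  by exists i; split => //; apply: (term_all sg eE tR tB cN).
case=> i [_ sub]; split => //.
move=> X; exact: (sub_laman sg eE tR tB sub).
Qed.
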